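(* Let $H$, $G$, the Coxeter generators $s_1,\dots,s_6,s_{3'}$ and the cosets $\pm v(i,j)\in G\backslash H$ be as in the context, with $H$ acting on $G\backslash H$ by right multiplication. (a) For $0\le k\le 5$ let $\rho_k$ denote the transposition $(k+1,k+2)$ of $\{0,1,\dots,7\}$. Then for all $0\le i<j\le 7$ and either choice of sign, $s_{6-k}(\pm v(i,j))=\pm v(\rho_k(i),\rho_k(j))$ (same sign on both sides). (b) Let $K_0=\{0,1,2,3\}$ and $K_1=\{4,5,6,7\}$. Then for $0\le i<j\le 7$, $$s_{3'}(\pm v(i,j))=\begin{cases}\mp v(k,l) & \text{if } \{i,j,k,l\}=K_p \text{ for some } p\in\{0,1\},\\ \pm v(i,j) & \text{otherwise.}\end{cases}$$
   Context: Let $W=\{(a,b,c,d,e,f,g,h)^T\in\mathbb{C}^8: 2+3a=b+c+d+e+f+g+h\}$. A transposition $(ij)\in S_8$ is identified with the $8\times8$ permutation matrix swapping the $i$th and $j$th coordinates. Let $X\in GL(8,\mathbb{C})$ be the matrix whose rows are $(\tfrac12,\tfrac12,-\tfrac12,-\tfrac12,-\tfrac12,\tfrac12,\tfrac12,\tfrac12)$, $e_2$, $(-\tfrac12,\tfrac12,\tfrac12,-\tfrac12,-\tfrac12,\tfrac12,\tfrac12,\tfrac12)$, $(-\tfrac12,\tfrac12,-\tfrac12,\tfrac12,-\tfrac12,\tfrac12,\tfrac12,\tfrac12)$, $(-\tfrac12,\tfrac12,-\tfrac12,-\tfrac12,\tfrac12,\tfrac12,\tfrac12,\tfrac12)$,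 $e_6,e_7,e_8$ (so for $\vec w\in W$, $X\vec w=(1+2a-c-d-e,b,1+a-d-e,1+a-c-e,1+a-c-d,f,g,h)^T$), and let $Y$ be the matrix with rows $(-1,2,0,0,0,0,0,0)$, $(-1,1,1,0,0,0,0,0)$, $(0,1,0,0,0,0,0,0)$, and, for $r=4,\dots,8$, the row $-e_1+e_2+e_r$ (so $Y\vec w=(2b-a,b+c-a,b,b+d-a,b+e-a,b+f-a,b+g-a,b+h-a)^T$). Let $H=\langle(23),(34),(45),(56),(67),(78),X,Y\rangle\subset GL(8,\mathbb{C})$; $H\cong W(E_7)$ with Coxeter generators $s_1=Y(23)$, $s_2=(34)$, $s_3=(45)$, $s_4=(56)$, $s_5=(67)$, $s_6=(78)$, $s_{3'}=X$. Let $G=\langle s_2,s_3,s_4,s_5,s_6,s_{3'}\rangle$ ($\cong W(E_6)$, index 56 in $H$). For $\vec w\in W$ put $x_0=b,x_1=h,x_2=g,x_3=f,x_4=e,x_5=d,x_6=c,x_7=a$. For $\alpha,\beta\in H$, the second entries of $\alpha\vec w$ and $\beta\vec w$ (as affine functions of $\vec w\in W$) agree iff $G\alpha=G\beta$, and each such second entry is $x_i+x_j-x_7$ or $1+x_7-x_i-x_j$ for some $0\le i<j\le 7$. Write $v(i,j)$ for the right coset of $G$ whose elements $\alpha$ give second entry $x_i+x_j-x_7$, and $-v(i,j)$ for the coset giving $1+x_7-x_i-x_j$; these are the 56 cosets, and $\pm v(j,i)$ means $\pm v(i,j)$. For an involution $s\in H$ and a coset $G\beta$, $s(G\beta):=G\beta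 s$. *)

(* Defs.v *)
From mathcomp Require Import all_boot all_order all_algebra all_fingroup all_field.
Set Implicit Arguments. Unset Strict Implicit. Unset Printing Implicit Defensive.
Import GRing.Theory Num.Theory.
Local Open Scope ring_scope.

(* 0-based coordinate indices: coordinate n (0..7) of C^8 corresponds to a,b,c,d,e,f,g,h. *)
Definition half : algC := 2%:R^-1.

Definition Xent (r c : nat) : algC :=
  match r with
  | 0 => if (2 <= c <= 4)%N then - half else half
  | 2 | 3 | 4 =>
      if c == 0%N then - half
      else if c == 1%N then half
      else if (c <= 4)%N then (if c == r then half else - half)
      else half
  | _ => (r == c)%:R
  end.
Definition Xmx : 'M[algC]_8 := \matrix_(r < 8, c < 8) Xent r c.

Definition Yent (r c : nat) : algC :=
  match r with
  | 0 => if c == 0%N then -1 else if c == 1%N then 2%:R else 0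
  | 1 => if c == 0%N then -1 else if (c == 1%N) || (c == 2%N) then 1 else 0
  | 2 => (c == 1%N)%:R
  | _ => if c == 0%N then -1 else if c == 1%N then 1 else (c == r)%:R
  end.
Definition Ymx : 'M[algC]_8 := \matrix_(r < 8, c < 8) Yent r c.

(* Transposition matrix swapping the 1-based coordinates p and q. *)
Definition T (p q : nat) : 'M[algC]_8 := tperm_mx (inord p.-1 : 'I_8) (inord q.-1).

Inductive genH : 'M[algC]_8 -> Prop :=
  | genT (p : nat) : (2 <= p <= 7)%N -> genH (T p p.+1)
  | genX : genH Xmx
  | genY : genH Ymx.

Inductive inH : 'M[algC]_8 -> Prop :=
  | inH1 : inH 1%:M
  | inH_gen A : genH A -> inH A
  | inH_mul A B : inH A -> inH B -> inH (A *m B)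
  | inH_inv A : inH A -> inH (invmx A).

(* Coxeter generators s_1..s_6 (s_{3'} = Xmx). *)
Definition sgen (m : nat) : 'M[algC]_8 :=
  if m == 1%N then Ymx *m T 2 3 else T m.+1 m.+2.

Definition wc (n : nat) (w : 'cV[algC]_8) : algC := w (inord n) 0.
Definition inW (w : 'cV[algC]_8) : Prop :=
  2%:R + 3%:R * wc 0 w =
  wc 1 w + wc 2 w + wc 3 w + wc 4 w + wc 5 w + wc 6 w + wc 7 w.

(* x_0 = b, x_1 = h, ..., x_6 = c, x_7 = a. *)
Definition xidx (i : nat) : nat :=
  if i == 0%N then 1%N else if i == 7%N then 0%N else (8 - i)%N.
Definition xv (i : nat) (w : 'cV[algC]_8) : algC := wc (xidx i) w.

Definition second (A : 'M[algC]_8) (w : 'cV[algC]_8) : algC := (A *m w) (inord 1) 0.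

(* A lies in the coset +v(i,j) (b = true) or -v(i,j) (b = false). *)
Definition vset (b : bool) (i j : nat) (A : 'M[algC]_8) : Prop :=
  inH A /\
  forall w, inW w ->
    second A w = (if b then xv i w + xv j w - xv 7 w
                  else 1 + xv 7 w - xv i w - xv j w).

Definition rho (k : 'I_6) : {perm 'I_8} := tperm (inord k.+1) (inord k.+2).

Definition K (p : bool) : {set 'I_8} :=
  if p then [set i : 'I_8 | (4 <= i)%N] else [set i : 'I_8 | (i < 4)%N].

(* Main.v *)
Require Import Defs.
From mathcomp Require Import all_boot all_order all_algebra all_fingroup all_field.
From mathcomp Require Import ring.
Set Implicit Arguments. Unset Strict Implicit. Unset Printing Implicit Defensive.
Import GRing.Theory Num.Theory.
Local Open Scope ring_scope.

Lemma sum8 (F : 'I_8 -> algC) : \sum_(c < 8) F c =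
  F (inord 0) + F (inord 1) + F (inord 2) + F (inord 3) + F (inord 4)
  + F (inord 5) + F (inord 6) + F (inord 7).
Proof.
rewrite !big_ord_recl big_ord0 addr0 !addrA.
by congr (_+_+_+_+_+_+_+_); congr F; apply/val_inj; rewrite /= inordK.
Qed.

Lemma wcE (M : 'M[algC]_8) w (n : nat) : (n < 8)%N ->
  wc n (M *m w) = \sum_(c < 8) M (inord n) c * w c 0.
Proof. by move=> _; rewrite /wc mxE. Qed.

Lemma inord_eqE (a b : nat) : (a < 8)%N -> (b < 8)%N ->
  ((inord a : 'I_8) == inord b) = (a == b).
Proof. by move=> ha hb; rewrite -val_eqE /= !inordK. Qed.

Lemma wcT p q n w : (0 < p <= 8)%N -> (0 < q <= 8)%N -> (n < 8)%N ->
  wc n (T p q *m w) = wc (if n == p.-1 then q.-1 else if n == q.-1 then p.-1 else n) w.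
Proof.
move=> hp hq hn; rewrite /T -xrowE /wc /xrow /row_perm mxE permE /=.
have hp' : (p.-1 < 8)%N by case: p hp => //= p; rewrite ltnS; case/andP.
have hq' : (q.-1 < 8)%N by case: q hq => //= q; rewrite ltnS; case/andP.
by rewrite !inord_eqE //; case: ifP => _ //; case: ifP.
Qed.


Lemma wcI (w : 'cV[algC]_8) n : w (inord n) 0 = wc n w.
Proof. by []. Qed.

Lemma rhoE (k : 'I_6) (n : 'I_8) :
  nat_of_ord (rho k n) = if val n == k.+1 then k.+2 else if val n == k.+2 then k.+1 else val n.
Proof.
case: k => k hk.
have h1 : (k.+1 < 8)%N by rewrite ltnS; apply: leq_trans hk _.
have h2 : (k.+2 < 8)%N by [].
rewrite /rho permE /=.
have E : forall m, (m < 8)%N -> (n == inord m :> 'I_8) = (val n == m).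
  by move=> m hm; rewrite -val_eqE /= inordK.
rewrite !E //; case: ifP => _; first by rewrite inordK.
by case: ifP => _ //; rewrite inordK.
Qed.

Definition dd (k : 'I_6) w := if val k == 5%N then xv 6 w - xv 7 w else 0.

Lemma lemA (k : 'I_6) w (n : 'I_8) :
  xv n (sgen (6 - k) *m w) = xv (rho k n) w + dd k w.
Proof.
rewrite rhoE /dd.
case: k => [[|[|[|[|[|[|k]]]]]] hk] //=;
case: n => [[|[|[|[|[|[|[|[|n]]]]]]]] hn] //=;
rewrite /xv /xidx /sgen /= ?wcT //= ?addr0 //.
all: try (rewrite -mulmxA wcE // sum8 !wcI !wcT // /Ymx !mxE !inordK //= ?subSS ?subn0).
all: try ring.
Qed.

Lemma inW1 w : inW w -> wc 1 w = 2%:R + 3%:R * wc 0 w -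
  (wc 2 w + wc 3 w + wc 4 w + wc 5 w + wc 6 w + wc 7 w).
Proof. by rewrite /inW => ->; ring. Qed.

Lemma lemA7 (k : 'I_6) w :
  xv 7 (sgen (6 - k) *m w) = xv 7 w + 2%:R * dd k w.
Proof.
have := lemA k w ord_max; rewrite /= => ->.
rewrite rhoE /dd; case: k => [[|[|[|[|[|[|k]]]]]] hk] //=; rewrite ?mulr0 ?addr0 //.
ring.
Qed.

Lemma inW_S (k : 'I_6) w : inW w -> inW (sgen (6 - k) *m w).
Proof.
move=> hW; have e := inW1 hW; move: hW; rewrite /inW => _.
case: k => [[|[|[|[|[|[|k]]]]]] hk] //=; rewrite /sgen /=.
all: try (rewrite !wcT //= e; ring).
rewrite -mulmxA !wcE // !sum8 !wcI !wcT // /Ymx !mxE !inordK //= e; ring.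
Qed.

Definition ee w := 1 + xv 7 w - xv 4 w - xv 5 w - xv 6 w.

Lemma lemX w (n : 'I_8) : inW w ->
  xv n (Xmx *m w) = xv n w + (if (4 <= n)%N then ee w else 0).
Proof.
move=> hW; have e := inW1 hW.
rewrite /ee; case: n => [[|[|[|[|[|[|[|[|n]]]]]]]] hn] //=;
rewrite /xv /xidx /= ?subSS ?subn0 wcE // sum8 !wcI /Xmx !mxE !inordK //= /Defs.half ?e.
all: field.
all: by [].
Qed.

Lemma inW_X w : inW w -> inW (Xmx *m w).
Proof.
move=> hW; have e := inW1 hW; rewrite /inW.
rewrite !wcE // !sum8 !wcI /Xmx !mxE !inordK //= /Defs.half e.
field.
all: by [].
Qed.

Lemma cardK p : #|K p| = 4%N.
Proof. case: p; rewrite /K -sum1_card big_mkcond /= !big_ord_recl big_ord0 /= !inE /=; done. Qed.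

Lemma setsum (F : 'I_8 -> algC) i j k l p : [set i;j;k;l] = K p ->
  F i + F j + F k + F l = \sum_(n in K p) F n.
Proof.
move=> hs.
have e : [set i;j;k;l] = l |: (k |: (i |: [set j])).
  apply/setP => x; rewrite !inE.
  by case: (x == i); case: (x == j); case: (x == k); case: (x == l).
have hc := cardK p; rewrite -hs e !cardsU1 cards1 in hc.
have hl : l \notin k |: (i |: [set j]).
  by move: hc; case: (l \notin _); case: (k \notin _); case: (i \notin _).
have hk : k \notin i |: [set j].
  by move: hc; case: (l \notin _); case: (k \notin _); case: (i \notin _).
have hi : i \notin [set j].
  by move: hc; case: (l \notin _); case: (k \notin _); case: (i \notin _).
rewrite -hs e (big_setU1 _ hl) (big_setU1 _ hk) (big_setU1 _ hi) big_set1 /=.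
by ring.
Qed.

Lemma inK i j k l p : [set i;j;k;l] = K p -> i \in K p /\ j \in K p.
Proof. by move=> <-; rewrite !inE !eqxx /= ?orbT. Qed.

Lemma lemX7 w : inW w -> xv 7 (Xmx *m w) = xv 7 w + ee w.
Proof. by move=> hW; have := lemX (@ord_max 7) hW; rewrite /= => ->. Qed.

Lemma inWx w : inW w -> xv 0 w = 2%:R + 3%:R * xv 7 w -
  (xv 1 w + xv 2 w + xv 3 w + xv 4 w + xv 5 w + xv 6 w).
Proof.
move=> hW; rewrite /xv /xidx /= ?subSS ?subn0 (inW1 hW); ring.
Qed.

Lemma sumK w p : \sum_(n in K p) xv n w =
  if p then xv 4 w + xv 5 w + xv 6 w + xv 7 w
  else xv 0 w + xv 1 w + xv 2 w + xv 3 w.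
Proof.
rewrite big_mkcond sum8 /K; case: p; rewrite !inE !inordK //=; ring.
Qed.

Lemma ifT' (a b : algC) : (if true then a else b) = a. Proof. by []. Qed.
Lemma ifF' (a b : algC) : (if false then a else b) = b. Proof. by []. Qed.

Lemma ifC' (c : bool) (a b : algC) : c -> (if c then a else b) = a.
Proof. by move=> ->. Qed.
Lemma ifN' (c : bool) (a b : algC) : ~~ c -> (if c then a else b) = b.
Proof. by move/negbTE=> ->. Qed.

Ltac wit a b p := exists (@Ordinal 8 a isT), (@Ordinal 8 b isT), p;
  apply/setP; case=> [[|[|[|[|[|[|[|[|?]]]]]]]] ?]; rewrite /K !inE //.

Theorem proposition3p3 :
  (forall (k : 'I_6) (b : bool) (i j : 'I_8) (A : 'M[algC]_8),
      (i < j)%N -> vset b i j A ->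
      vset b (rho k i) (rho k j) (A *m sgen (6 - k)))
  /\
  (forall (b : bool) (i j : 'I_8) (A : 'M[algC]_8),
      (i < j)%N -> vset b i j A ->
      (forall (k l : 'I_8) (p : bool), [set i; j; k; l] = K p ->
          vset (~~ b) k l (A *m Xmx))
      /\
      ((~ exists (k l : 'I_8) (p : bool), [set i; j; k; l] = K p) ->
          vset b i j (A *m Xmx))).
Proof.
split.
  move=> k b i j A _ [hA hs]; split.
    apply: inH_mul hA _; case: k => [[|[|[|[|[|[|k]]]]]] hk] //=;
    rewrite /sgen /= ?subSS ?subn0 /=;
    try (apply: inH_gen; apply: genT; done).
    by apply: inH_mul; apply: inH_gen; [exact: genY | exact: genT].
  move=> w hW.
  have -> : second (A *m sgen (6 - k)) w = second A (sgen (6 - k) *m w).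
    by rewrite /second mulmxA.
  rewrite (hs _ (inW_S k hW)) !lemA lemA7; case: b hs => _; ring.
move=> b i j A hij [hA hs].
have hA' : inH (A *m Xmx) := inH_mul hA (inH_gen genX).
split.
  move=> k l p hset; split => // w hW.
  have -> : second (A *m Xmx) w = second A (Xmx *m w) by rewrite /second mulmxA.
  rewrite (hs _ (inW_X hW)) !lemX // lemX7 //.
  have hsum := setsum (fun n => xv n w) hset; rewrite /= sumK in hsum.
  have [hi hj] := inK hset.
  have -> : xv k w = (xv i w + xv j w + xv k w + xv l w) - xv i w - xv j w - xv l w
    by ring.
  rewrite hsum; move: hi hj; clear hset hsum; case: p; rewrite /K !inE => hi hj.
    by rewrite (ifC' _ _ hi) (ifC' _ _ hj) /ee; case: b hs => _; ring.
  have hi' : ~~ (3 < i)%N by rewrite -ltnNge.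
  have hj' : ~~ (3 < j)%N by rewrite -ltnNge.
  rewrite (ifN' _ _ hi') (ifN' _ _ hj') /ee (inWx hW); case: b hs => _; ring.
move=> hno; split => // w hW.
have -> : second (A *m Xmx) w = second A (Xmx *m w) by rewrite /second mulmxA.
rewrite (hs _ (inW_X hW)) !lemX // lemX7 //.
case hi: (4 <= i)%N; case hj: (4 <= j)%N; rewrite ?ifT' ?ifF' /ee;
  try (case: b hs => _; ring).
all: exfalso; apply: hno; clear hs; move: hij hi hj.
all: case: i => [[|[|[|[|[|[|[|[|?]]]]]]]] ?]; case: j => [[|[|[|[|[|[|[|[|?]]]]]]]] ?] => //.
all: move=> _ _ _.
all: first [ solve [wit 0%N 1%N false] | solve [wit 0%N 2%N false] | solve [wit 0%N 3%N false]
           | solve [wit 1%N 2%N false] | solve [wit 1%N 3%N false] | solve [wit 2%N 3%N false]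
           | solve [wit 4%N 5%N true] | solve [wit 4%N 6%N true] | solve [wit 4%N 7%N true]
           | solve [wit 5%N 6%N true] | solve [wit 5%N 7%N true] | solve [wit 6%N 7%N true] ].
Qed.
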